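(* For each $2p\in\{140, 196, 220, 260, 308, 340\}$ there exists a cyclic DCA$(4,2p+1;2p)$ satisfying P1 and P2.
   Context: A difference covering array DCA$(k,\eta;n)$ over $\mathbb{Z}_n$ (a cyclic DCA) is an $\eta\times k$ matrix $Q=[q(i,j)]$ with entries in $\mathbb{Z}_n$ such that for every pair of distinct columns $j,j'$ the multiset $\{q(i,j)-q(i,j') : 0\le i\le \eta-1\}$ contains every element of $\mathbb{Z}_n$ at least once. A DCA$(k,n+1;n)$ is taken in normalized form: all entries of its last row (row $n$) and last column (column $k-1$) equal $0$. It satisfies P1 if $0$ occurs at least twice in every column, and P2 if for all distinct columns $j,j'$ with $j\neq k-1\neq j'$, the set $\{q(i,j)-q(i,j') : 0\le i\le n-1\}$ equals $\mathbb{Z}_n\setminus\{0\}$. *)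

(* Defs.v *)
(* Z_n is represented by 'I_n with arithmetic mod n. *)
From mathcomp Require Import all_boot all_order all_algebra.
Set Implicit Arguments. Unset Strict Implicit. Unset Printing Implicit Defensive.

Definition zdiff (n : nat) (a b : 'I_n) : nat := (a + (n - b)) %% n.

(* Q is a DCA(k, eta; n) over Z_n: for all distinct columns j j',
   every element of Z_n occurs among the differences q(i,j) - q(i,j'). *)
Definition is_DCA (n eta k : nat) (Q : 'M['I_n]_(eta, k)) : Prop :=
  forall j j' : 'I_k, j != j' ->
    forall d : 'I_n, exists i : 'I_eta, zdiff (Q i j) (Q i j') = d.

Definition DCA_normalized (n k : nat) (Q : 'M['I_n]_(n.+1, k.+1)) : Prop :=
  (forall j, nat_of_ord (Q ord_max j) = 0) /\
  (forall i, nat_of_ord (Q i ord_max) = 0).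

Definition DCA_P1 (n eta k : nat) (Q : 'M['I_n]_(eta, k)) : Prop :=
  forall j : 'I_k, 2 <= #|[set i : 'I_eta | nat_of_ord (Q i j) == 0]|.

Definition DCA_P2 (n k : nat) (Q : 'M['I_n]_(n.+1, k.+1)) : Prop :=
  forall j j' : 'I_k.+1, j != j' -> j != ord_max -> j' != ord_max ->
    forall d : nat,
      (exists2 i : 'I_n.+1, i < n & zdiff (Q i j) (Q i j') = d) <->
      (0 < d < n).

(* Main.v *)
Require Import Defs.
From mathcomp Require Import all_boot all_order all_algebra.
Set Implicit Arguments. Unset Strict Implicit. Unset Printing Implicit Defensive.

Definition dz (n a b : nat) : nat := (a + (n - b)) %% n.
Definition ent (L : seq (seq nat)) (j i : nat) : nat := nth 0 (nth [::] L j) i.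
Definition dl n L j j' k := [seq dz n (ent L j i) (ent L j' i) | i <- iota 0 k].

Definition covers (D s : seq nat) : bool := subseq s (sort leq D).

Lemma coversP D s : covers D s -> forall d, d \in s -> d \in D.
Proof. by move=> H d ds; rewrite -(mem_sort leq); apply: (mem_subseq H). Qed.

Definition check (n : nat) (L : seq (seq nat)) : bool :=
  [&& size L == 4, all (fun c => size c == n.+1) L, all (all (fun v => v < n)) L,
      nth [::] L 3 == nseq n.+1 0,
      all (fun c => nth 1 c n == 0) L,
      all (fun c => index 0 c < n) L,
      all (fun j => all (fun j' => (j == j') || covers (dl n L j j' n.+1) (iota 0 n)) (iota 0 4)) (iota 0 4)
    & all (fun j => all (fun j' => (j == j') ||
        (all (fun d => 0 < d) (dl n L j j' n) && covers (dl n L j j' n) (iota 1 n.-1))) (iota 0 3)) (iota 0 3)].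

Lemma nth_dl n L j j' k i : i < k -> nth 0 (dl n L j j' k) i = dz n (ent L j i) (ent L j' i).
Proof. by move=> ik; rewrite /dl (nth_map 0) ?size_iota // nth_iota. Qed.

Lemma size_dl n L j j' k : size (dl n L j j' k) = k.
Proof. by rewrite size_map size_iota. Qed.

Lemma gen m (L : seq (seq nat)) : check m.+1 L ->
  exists Q : 'M['I_m.+1]_(m.+2, 4),
      is_DCA Q /\ DCA_normalized Q /\ DCA_P1 Q /\ DCA_P2 Q.
Proof.
set n := m.+1.
move=> /andP[/eqP sL /andP[/allP szL /andP[/allP ltL /andP[/eqP c3 /andP[/allP lastL /andP[/allP idxL /andP[/allP pairsA /allP pairsB]]]]]]].
have Hlt : forall j i, j < 4 -> ent L j i < n.
  move=> j i j4; rewrite /ent.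
  have jin : nth [::] L j \in L by apply: mem_nth; rewrite sL.
  have := ltL _ jin => /allP Hc.
  case: (ltnP i (size (nth [::] L j))) => hi.
    by apply: Hc; apply: mem_nth.
  by rewrite nth_default.
have Hsz : forall j, j < 4 -> size (nth [::] L j) = n.+1.
  by move=> j j4; apply/eqP/szL/mem_nth; rewrite sL.
pose Q : 'M['I_n]_(n.+1, 4) := (\matrix_(i < n.+1, j < 4) inord (ent L j i))%R.
have QE : forall (i : 'I_n.+1) (j : 'I_4), nat_of_ord (Q i j) = ent L j i.
  by move=> i j; rewrite /Q mxE inordK // Hlt.
have ZE : forall (i : 'I_n.+1) (j j' : 'I_4), zdiff (Q i j) (Q i j') = dz n (ent L j i) (ent L j' i).
  by move=> i j j'; rewrite /zdiff !QE.
exists Q; split; [|split; [|split]].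
- move=> j j' jj' d.
  have H1 := allP (pairsA j ltac:(by rewrite mem_iota /= ?ltn_ord))  j' ltac:(by rewrite mem_iota /= ?ltn_ord).
  move: H1 => /orP [/eqP E | /coversP H2]; first by move: jj'; rewrite -val_eqE /= E eqxx.
  have din := H2 d ltac:(by rewrite mem_iota /= ?ltn_ord).
  have ilt : index (nat_of_ord d) (dl n L j j' n.+1) < n.+1.
    by rewrite -[X in _ < X](size_dl n L j j' n.+1) index_mem.
  exists (Ordinal ilt); rewrite ZE /= -(nth_dl n L j j' ilt).
  exact: nth_index.
- split.
  + move=> j; rewrite QE /ent.
    have jin : nth [::] L j \in L by apply: mem_nth; rewrite sL.
    have := lastL _ jin; rewrite (set_nth_default 0) ?Hsz //.
    by move/eqP.
  + by move=> i; rewrite QE /ent c3 nth_nseq ltn_ord.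
- move=> j.
  have jin : nth [::] L j \in L by apply: mem_nth; rewrite sL.
  have hi := idxL _ jin.
  have hi' : index 0 (nth [::] L j) < n.+1 by apply: ltnW.
  pose i0 : 'I_n.+1 := Ordinal hi'.
  have ne : i0 != ord_max by rewrite -val_eqE /= neq_ltn hi.
  suff S : [set i0; ord_max] \subset [set i | nat_of_ord (Q i j) == 0].
    by apply: leq_trans (subset_leq_card S); rewrite cards2 ne.
  apply/subsetP => x; rewrite !inE => /orP [] /eqP ->; rewrite QE /ent /=.
    apply/eqP; apply: (nth_index 0).
    by rewrite -index_mem Hsz //; apply: ltnW.
  by apply/eqP; move: (lastL _ jin); rewrite (set_nth_default 0) ?Hsz // => /eqP.
- move=> j j' jj' jm j'm d.
  have j3 : nat_of_ord j < 3.
    by move: (ltn_ord j) jm; rewrite ltnS leq_eqVlt -val_eqE /= => /orP [] // ->.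
  have j'3 : nat_of_ord j' < 3.
    by move: (ltn_ord j') j'm; rewrite ltnS leq_eqVlt -val_eqE /= => /orP [] // ->.
  have H1 := allP (pairsB j ltac:(by rewrite mem_iota /= ?ltn_ord))  j' ltac:(by rewrite mem_iota /= ?ltn_ord).
  move: H1 => /orP [/eqP E | /andP [/allP Hpos /coversP Hall]]; first by move: jj'; rewrite -val_eqE /= E eqxx.
  split.
  + case=> i ilt; rewrite ZE => <-.
    have mem : dz n (ent L j i) (ent L j' i) \in dl n L j j' n.
      by apply/mapP; exists (nat_of_ord i) => //; rewrite mem_iota.
    by rewrite (Hpos _ mem) /dz ltn_pmod.
  + move=> dr.
    have : d \in dl n L j j' n by apply: Hall; rewrite mem_iota; case/andP: dr => d0 dn; apply/andP; split => //; rewrite add1n.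
    move=> din.
    have ilt' : index d (dl n L j j' n) < n by rewrite -[X in _ < X](size_dl n L j j' n) index_mem.
    have ilt : index d (dl n L j j' n) < n.+1 by apply: ltnW.
    exists (Ordinal ilt); first by [].
    rewrite ZE /= -(nth_dl n L j j' ilt'); exact: nth_index.
Qed.

Definition L140 : seq (seq nat) := [:: [:: 80; 20; 40; 120; 100; 60; 1; 121; 81; 101; 41; 61; 22; 2; 102; 122; 62; 82; 43; 23; 123; 3; 83; 103; 24; 104; 124; 64; 44; 4; 85; 65; 25; 45; 125; 5; 106; 86; 46; 66; 6; 26; 127; 107; 67; 87; 27; 47; 8; 128; 88; 108; 48; 68; 129; 69; 89; 29; 9; 109; 10; 90; 110; 50; 30; 130; 71; 51; 11; 31; 111; 131; 52; 132; 12; 92; 72; 32; 113; 93; 53; 73; 13; 33; 134; 114; 74; 94; 34; 54; 115; 55; 75; 15; 135; 95; 36; 16; 116; 136; 76; 96; 57; 37; 137; 17; 97; 117; 78; 58; 18; 38; 118; 138; 99; 79; 39; 59; 139; 19; 0; 21; 42; 63; 84; 105; 126; 7; 28; 49; 70; 91; 112; 133; 14; 35; 56; 77; 98; 119; 0]; [:: 61; 101; 41; 33; 73; 13; 83; 103; 3; 128; 88; 8; 90; 110; 10; 107; 67; 127; 17; 97; 117; 37; 137; 57; 114; 74; 134; 62; 82; 122; 12; 52; 132; 9; 109; 29; 44; 4; 64; 72; 32; 92; 118; 138; 38; 6; 26; 66; 58; 18; 78; 69; 89; 129; 81; 1; 121; 80; 20; 40; 93; 53; 113; 65; 25; 85;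 47; 87; 27; 86; 46; 106; 60; 120; 100; 136; 76; 96; 2; 102; 22; 116; 36; 16; 31; 111; 131; 30; 130; 50; 104; 124; 24; 95; 15; 135; 75; 115; 55; 48; 68; 108; 19; 59; 139; 34; 54; 94; 23; 123; 43; 51; 11; 71; 79; 39; 99; 5; 45; 125; 133; 98; 21; 112; 0; 77; 91; 49; 63; 7; 56; 119; 35; 14; 28; 105; 126; 84; 42; 70; 0]; [:: 55; 75; 115; 17; 97; 117; 137; 57; 37; 46; 106; 86; 45; 125; 5; 50; 30; 130; 53; 113; 93; 123; 43; 23; 118; 138; 38; 67; 127; 107; 9; 109; 29; 71; 51; 11; 27; 47; 87; 139; 19; 59; 128; 88; 8; 26; 66; 6; 96; 136; 76; 81; 1; 121; 20; 40; 80; 111; 131; 31; 25; 85; 65; 82; 122; 62; 73; 13; 33; 15; 135; 95; 79; 39; 99; 61; 101; 41; 3; 83; 103; 124; 24; 104; 72; 32; 92; 132; 12; 52; 100; 60; 120; 2; 102; 22; 10; 90; 110; 16; 116; 36; 69; 89; 129; 134; 114; 74; 94; 34; 54; 4; 64; 44; 48; 68; 108; 78; 58; 18; 14; 49; 119; 28; 77; 63; 21; 98; 35; 91; 126; 112; 42; 56; 133; 84; 0; 7; 70; 105; 0]; nseq 141 0].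
Lemma chk140 : check 140 L140. Proof. vm_compute. reflexivity. Qed.

Definition L196 : seq (seq nat) := [:: [:: 22; 50; 78; 106; 134; 162; 190; 19; 159; 103; 47; 187; 131; 75; 2; 58; 114; 170; 30; 86; 142; 3; 87; 171; 59; 143; 31; 115; 8; 36; 64; 92; 120; 148; 176; 1; 29; 57; 85; 113; 141; 169; 5; 145; 89; 33; 173; 117; 61; 4; 116; 32; 144; 60; 172; 88; 9; 65; 121; 177; 37; 93; 149; 26; 166; 110; 54; 194; 138; 82; 13; 181; 153; 125; 97; 69; 41; 10; 94; 178; 66; 150; 38; 122; 17; 101; 185; 73; 157; 45; 129; 25; 137; 53; 165; 81; 193; 109; 11; 123; 39; 151; 67; 179; 95; 18; 130; 46; 158; 74; 186; 102; 12; 152; 96; 40; 180; 124; 68; 20; 188; 160; 132; 104; 76; 48; 23; 79; 135; 191; 51; 107; 163; 27; 195; 167; 139; 111; 83; 55; 16; 72; 128; 184; 44; 100; 156; 24; 108; 192; 80; 164; 52; 136; 15; 43; 71; 99; 127; 155; 183; 6; 174; 146; 118; 90; 62; 34; 0; 7; 14; 21; 28; 35; 42; 49; 56; 63; 70; 77; 84; 91; 98; 105; 112; 119; 126; 133; 140; 147; 154; 161; 168; 175; 182; 189; 0]; [:: 27; 195; 167; 139; 111; 83; 55; 22; 50; 78; 106; 134; 162; 190; 18; 130; 46; 158; 74; 186; 102; 4; 116; 32; 144; 60; 172; 88; 25; 137; 53; 165; 81; 193; 109; 19; 159; 103; 47; 187; 131; 75; 16; 72; 128; 184; 44; 100; 156;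 1; 29; 57; 85; 113; 141; 169; 13; 181; 153; 125; 97; 69; 41; 17; 101; 185; 73; 157; 45; 129; 26; 166; 110; 54; 194; 138; 82; 6; 174; 146; 118; 90; 62; 34; 9; 65; 121; 177; 37; 93; 149; 23; 79; 135; 191; 51; 107; 163; 5; 145; 89; 33; 173; 117; 61; 20; 188; 160; 132; 104; 76; 48; 24; 108; 192; 80; 164; 52; 136; 2; 58; 114; 170; 30; 86; 142; 3; 87; 171; 59; 143; 31; 115; 8; 36; 64; 92; 120; 148; 176; 15; 43; 71; 99; 127; 155; 183; 11; 123; 39; 151; 67; 179; 95; 10; 94; 178; 66; 150; 38; 122; 12; 152; 96; 40; 180; 124; 68; 21; 182; 56; 112; 42; 91; 119; 84; 154; 189; 77; 105; 49; 14; 161; 175; 28; 7; 70; 35; 126; 0; 63; 98; 140; 168; 133; 147; 0]; [:: 18; 130; 46; 158; 74; 186; 102; 2; 58; 114; 170; 30; 86; 142; 3; 87; 171; 59; 143; 31; 115; 9; 65; 121; 177; 37; 93; 149; 27; 195; 167; 139; 111; 83; 55; 16; 72; 128; 184; 44; 100; 156; 25; 137; 53; 165; 81; 193; 109; 17; 101; 185; 73; 157; 45; 129; 8; 36; 64; 92; 120; 148; 176; 6; 174; 146; 118; 90; 62; 34; 10; 94; 178; 66; 150; 38; 122; 5; 145; 89; 33; 173; 117; 61; 15; 43; 71; 99; 127; 155; 183; 13; 181; 153; 125; 97; 69; 41; 1; 29; 57; 85; 113; 141; 169; 12; 152; 96; 40; 180; 124; 68; 22; 50; 78; 106; 134; 162;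 190; 24; 108; 192; 80; 164; 52; 136; 4; 116; 32; 144; 60; 172; 88; 11; 123; 39; 151; 67; 179; 95; 19; 159; 103; 47; 187; 131; 75; 26; 166; 110; 54; 194; 138; 82; 20; 188; 160; 132; 104; 76; 48; 23; 79; 135; 191; 51; 107; 163; 147; 161; 112; 70; 189; 119; 154; 168; 28; 91; 63; 98; 140; 182; 77; 42; 126; 21; 35; 175; 7; 133; 84; 105; 49; 14; 56; 0; 0]; nseq 197 0].
Lemma chk196 : check 196 L196. Proof. vm_compute. reflexivity. Qed.

Definition L220 : seq (seq nat) := [:: [:: 100; 80; 180; 60; 20; 200; 160; 140; 120; 40; 1; 201; 81; 181; 141; 101; 61; 41; 21; 161; 2; 182; 162; 142; 62; 122; 102; 202; 82; 42; 23; 3; 103; 203; 163; 123; 83; 63; 43; 183; 24; 204; 184; 164; 84; 144; 124; 4; 104; 64; 145; 105; 85; 65; 205; 45; 25; 125; 5; 185; 46; 6; 206; 186; 106; 166; 146; 26; 126; 86; 167; 127; 107; 87; 7; 67; 47; 147; 27; 207; 188; 168; 48; 148; 108; 68; 28; 8; 208; 128; 89; 69; 169; 49; 9; 189; 149; 129; 109; 29; 90; 50; 30; 10; 150; 210; 190; 70; 170; 130; 111; 91; 191; 71; 31; 211; 171; 151; 131; 51; 112; 72; 52; 32; 172; 12; 212; 92; 192; 152; 13; 193; 173; 153; 73; 133; 113; 213; 93; 53; 34; 14; 114; 214; 174; 134; 94; 74; 54; 194; 35; 215; 195; 175; 95; 155; 135; 15; 115; 75; 156; 116; 96; 76; 216;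 56; 36; 136; 16; 196; 177; 157; 37; 137; 97; 57; 17; 217; 197; 117; 78; 58; 158; 38; 218; 178; 138; 118; 98; 18; 79; 39; 19; 219; 139; 199; 179; 59; 159; 119; 0; 121; 22; 143; 44; 165; 66; 187; 88; 209; 110; 11; 132; 33; 154; 55; 176; 77; 198; 99; 0]; [:: 81; 1; 181; 141; 201; 113; 53; 133; 213; 93; 3; 163; 23; 103; 203; 188; 168; 48; 148; 108; 30; 90; 10; 150; 50; 147; 67; 27; 207; 47; 117; 197; 17; 57; 217; 157; 97; 177; 37; 137; 14; 174; 34; 114; 214; 102; 42; 122; 202; 82; 172; 32; 72; 112; 52; 129; 189; 109; 29; 149; 124; 64; 144; 4; 104; 192; 92; 152; 212; 12; 18; 98; 138; 178; 118; 126; 26; 86; 146; 166; 58; 218; 78; 158; 38; 89; 69; 169; 49; 9; 101; 61; 41; 21; 161; 100; 80; 180; 60; 20; 193; 73; 13; 173; 153; 145; 105; 85; 65; 205; 107; 167; 87; 7; 127; 206; 46; 186; 106; 6; 160; 40; 200; 140; 120; 156; 116; 96; 76; 216; 162; 2; 142; 62; 182; 36; 196; 56; 136; 16; 91; 31; 111; 191; 71; 190; 130; 210; 70; 170; 204; 84; 24; 184; 164; 95; 175; 215; 35; 195; 155; 135; 15; 115; 75; 128; 208; 28; 68; 8; 159; 59; 119; 179; 199; 94; 194; 134; 74; 54; 183; 43; 83; 123; 63; 131; 151; 51; 171; 211; 39; 139; 79; 19; 219; 25; 185; 45; 125; 5; 33; 198; 121; 132; 0; 77; 11; 209; 143; 187;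 176; 99; 55; 154; 88; 165; 66; 44; 22; 110; 0]; [:: 75; 115; 135; 155; 15; 17; 117; 57; 217; 197; 97; 137; 157; 177; 37; 126; 26; 86; 146; 166; 205; 65; 105; 145; 85; 150; 10; 50; 90; 30; 93; 213; 53; 113; 133; 63; 123; 43; 183; 83; 98; 118; 18; 138; 178; 7; 87; 127; 167; 107; 149; 29; 189; 129; 109; 31; 71; 91; 111; 191; 207; 27; 47; 67; 147; 139; 219; 39; 79; 19; 148; 48; 108; 168; 188; 106; 186; 6; 46; 206; 156; 116; 96; 76; 216; 61; 161; 101; 41; 21; 80; 20; 100; 180; 60; 51; 131; 171; 211; 151; 25; 185; 45; 125; 5; 62; 142; 182; 2; 162; 73; 153; 193; 13; 173; 175; 195; 95; 215; 35; 199; 179; 59; 159; 119; 81; 1; 181; 141; 201; 23; 3; 103; 203; 163; 204; 84; 24; 184; 164; 192; 92; 152; 212; 12; 32; 52; 172; 72; 112; 140; 200; 120; 40; 160; 82; 202; 42; 102; 122; 170; 70; 130; 190; 210; 136; 56; 16; 196; 36; 169; 89; 49; 9; 69; 54; 74; 194; 94; 134; 214; 114; 174; 14; 34; 124; 64; 144; 4; 104; 208; 8; 128; 28; 68; 38; 158; 218; 58; 78; 154; 209; 99; 88; 77; 143; 121; 198; 55; 11; 66; 132; 22; 176; 33; 44; 0; 187; 110; 165; 0]; nseq 221 0].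
Lemma chk220 : check 220 L220. Proof. vm_compute. reflexivity. Qed.

Definition L260 : seq (seq nat) := [:: [:: 40; 120; 160; 100; 140; 220; 80; 240; 60; 200; 20; 180; 1; 81; 121; 61; 101; 181; 41; 201; 21; 161; 241; 141; 2; 162; 242; 122; 202; 102; 222; 42; 82; 22; 62; 142; 183; 3; 43; 243; 23; 103; 223; 123; 203; 83; 163; 63; 184; 84; 164; 44; 124; 24; 144; 224; 4; 204; 244; 64; 145; 45; 125; 5; 85; 245; 105; 185; 225; 165; 205; 25; 106; 6; 86; 226; 46; 206; 66; 146; 186; 126; 166; 246; 67; 227; 47; 187; 7; 167; 27; 107; 147; 87; 127; 207; 248; 68; 108; 48; 88; 168; 28; 188; 8; 148; 228; 128; 209; 29; 69; 9; 49; 129; 249; 149; 229; 109; 189; 89; 210; 110; 190; 70; 150; 50; 170; 250; 30; 230; 10; 90; 131; 211; 251; 191; 231; 51; 171; 71; 151; 31; 111; 11; 132; 32; 112; 252; 72; 232; 92; 172; 212; 152; 192; 12; 93; 253; 73; 213; 33; 193; 53; 133; 173; 113; 153; 233; 14; 94; 134; 74; 114; 194; 54; 214; 34; 174; 254; 154; 15; 175; 255; 135; 215; 115; 235; 55; 95; 35; 75; 155; 236; 136; 216; 96; 176; 76; 196; 16; 56; 256; 36; 116; 157; 237; 17; 217; 257; 77; 197; 97; 177; 57; 137; 37; 118; 198; 238; 178; 218; 38; 158; 58; 138; 18; 98; 258; 119; 19; 99; 239; 59; 219; 79; 159; 199; 139; 179; 259; 0; 221; 182; 143; 104; 65; 26;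 247; 208; 169; 130; 91; 52; 13; 234; 195; 156; 117; 78; 39; 0]; [:: 121; 181; 81; 101; 1; 61; 53; 133; 173; 113; 153; 233; 3; 243; 103; 183; 43; 23; 108; 168; 68; 88; 248; 48; 150; 190; 210; 50; 70; 110; 147; 207; 107; 127; 27; 87; 97; 57; 37; 197; 177; 137; 237; 217; 77; 157; 17; 257; 14; 94; 134; 74; 114; 194; 162; 122; 102; 2; 242; 202; 252; 132; 72; 32; 232; 112; 149; 109; 89; 249; 229; 189; 144; 224; 4; 204; 244; 64; 172; 152; 12; 92; 212; 192; 18; 158; 98; 58; 258; 138; 186; 246; 146; 166; 66; 126; 198; 178; 38; 118; 238; 218; 69; 129; 29; 49; 209; 9; 41; 201; 21; 161; 241; 141; 160; 220; 120; 140; 40; 100; 213; 93; 33; 253; 193; 73; 45; 5; 245; 145; 125; 85; 227; 187; 167; 67; 47; 7; 226; 106; 46; 6; 206; 86; 200; 80; 20; 240; 180; 60; 236; 136; 216; 96; 176; 76; 22; 222; 62; 42; 142; 82; 16; 256; 116; 196; 56; 36; 211; 191; 51; 131; 251; 231; 250; 230; 90; 170; 30; 10; 44; 184; 124; 84; 24; 164; 175; 135; 115; 15; 255; 215; 95; 155; 55; 75; 235; 35; 188; 148; 128; 28; 8; 228; 199; 259; 159; 179; 79; 139; 174; 54; 254; 214; 154; 34; 123; 83; 63; 223; 203; 163; 111; 151; 171; 11; 31; 71; 239; 119; 59; 19; 219; 99; 225; 25; 185; 205; 105; 165; 13; 78; 221; 52; 0; 117; 91; 169; 143; 247; 156; 39;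 195; 234; 208; 65; 26; 104; 182; 130; 0]; [:: 55; 35; 155; 235; 95; 75; 57; 197; 137; 97; 37; 177; 217; 157; 257; 237; 77; 17; 66; 146; 186; 126; 166; 246; 5; 145; 85; 45; 245; 125; 150; 190; 210; 50; 70; 110; 153; 173; 53; 233; 113; 133; 163; 203; 223; 63; 83; 123; 98; 138; 158; 258; 18; 58; 7; 47; 67; 167; 187; 227; 89; 189; 109; 229; 149; 249; 51; 231; 191; 251; 211; 131; 87; 27; 127; 107; 207; 147; 99; 219; 19; 59; 119; 239; 248; 68; 108; 48; 88; 168; 6; 226; 206; 106; 86; 46; 96; 236; 176; 136; 76; 216; 161; 41; 241; 201; 141; 21; 120; 100; 220; 40; 160; 140; 71; 31; 11; 171; 151; 111; 185; 165; 25; 105; 225; 205; 42; 22; 142; 222; 82; 62; 73; 193; 253; 33; 93; 213; 215; 255; 15; 115; 135; 175; 179; 199; 79; 259; 139; 159; 121; 181; 81; 101; 1; 61; 23; 43; 183; 103; 243; 3; 184; 84; 164; 44; 124; 24; 192; 212; 92; 12; 152; 172; 72; 112; 132; 232; 252; 32; 20; 60; 80; 180; 200; 240; 2; 162; 242; 122; 202; 102; 170; 250; 30; 230; 10; 90; 56; 116; 16; 36; 196; 256; 49; 69; 209; 129; 9; 29; 34; 154; 214; 254; 54; 174; 114; 134; 14; 194; 74; 94; 224; 204; 64; 144; 4; 244; 8; 128; 188; 228; 28; 148; 218; 238; 118; 38; 178; 198; 234; 169; 39; 208; 117; 143; 221; 78; 195; 91; 26; 52; 182; 156; 13; 104; 0;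 247; 130; 65; 0]; nseq 261 0].
Lemma chk260 : check 260 L260. Proof. vm_compute. reflexivity. Qed.

Definition L308 : seq (seq nat) := [:: [:: 56; 168; 224; 280; 196; 112; 28; 140; 252; 84; 1; 113; 169; 225; 141; 57; 281; 85; 197; 29; 2; 226; 30; 142; 282; 254; 58; 114; 170; 86; 199; 3; 59; 115; 31; 255; 171; 283; 87; 227; 200; 116; 228; 32; 172; 144; 256; 4; 60; 284; 145; 61; 173; 285; 117; 89; 201; 257; 5; 229; 90; 6; 118; 230; 62; 34; 146; 202; 258; 174; 35; 259; 63; 175; 7; 287; 91; 147; 203; 119; 232; 36; 92; 148; 64; 288; 204; 8; 120; 260; 177; 289; 37; 93; 9; 233; 149; 261; 65; 205; 178; 94; 206; 10; 150; 122; 234; 290; 38; 262; 67; 179; 235; 291; 207; 123; 39; 151; 263; 95; 68; 292; 96; 208; 40; 12; 124; 180; 236; 152; 13; 237; 41; 153; 293; 265; 69; 125; 181; 97; 210; 14; 70; 126; 42; 266; 182; 294; 98; 238; 211; 127; 239; 43; 183; 155; 267; 15; 71; 295; 156; 72; 184; 296; 128; 100; 212; 268; 16; 240; 45; 157; 213; 269; 185; 101; 17; 129; 241; 73; 298; 102; 158; 214; 130; 46; 270; 74; 186; 18; 299; 215; 19; 131; 271; 243; 47; 103; 159; 75; 188; 300; 48; 104; 20; 244; 160; 272; 76; 216; 133; 245; 301; 49; 273; 189; 105; 217; 21; 161; 78; 190; 246; 302; 218; 134; 50; 162; 274; 106; 23; 135; 191; 247; 163; 79; 303; 107; 219; 51;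 24; 248; 52; 164; 304; 276; 80; 136; 192; 108; 221; 25; 81; 137; 53; 277; 193; 305; 109; 249; 222; 138; 250; 54; 194; 166; 278; 26; 82; 306; 111; 223; 279; 27; 251; 167; 83; 195; 307; 139; 0; 253; 198; 143; 88; 33; 286; 231; 176; 121; 66; 11; 264; 209; 154; 99; 44; 297; 242; 187; 132; 77; 22; 275; 220; 165; 110; 55; 0]; [:: 213; 45; 269; 185; 157; 140; 112; 252; 84; 28; 35; 259; 63; 175; 7; 89; 201; 257; 5; 229; 272; 244; 76; 216; 160; 4; 144; 60; 284; 256; 113; 141; 1; 169; 225; 105; 161; 189; 217; 21; 206; 178; 10; 150; 94; 9; 93; 289; 177; 37; 54; 250; 194; 138; 222; 190; 218; 78; 246; 302; 285; 173; 117; 61; 145; 106; 274; 50; 134; 162; 102; 130; 298; 158; 214; 18; 186; 270; 46; 74; 90; 6; 118; 230; 62; 254; 58; 114; 170; 86; 2; 226; 30; 142; 282; 96; 68; 208; 40; 292; 182; 238; 266; 294; 98; 235; 67; 291; 207; 179; 277; 193; 305; 109; 249; 245; 273; 133; 301; 49; 215; 271; 299; 19; 131; 24; 248; 52; 164; 304; 72; 128; 156; 184; 296; 228; 200; 32; 172; 116; 92; 232; 148; 64; 36; 166; 278; 26; 82; 306; 91; 119; 287; 147; 203; 79; 303; 107; 219; 51; 69; 97; 265; 125; 181; 81; 221; 137; 53; 25; 139; 307; 83; 167; 195; 41; 13; 153; 293; 237; 47; 75; 243; 103; 159; 171; 227; 255; 283; 87; 100; 212; 268; 16; 240; 168; 196;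 56; 224; 280; 267; 295; 155; 15; 71; 39; 95; 123; 151; 263; 29; 197; 281; 57; 85; 23; 135; 191; 247; 163; 233; 149; 261; 65; 205; 73; 241; 17; 101; 129; 183; 43; 127; 211; 239; 8; 288; 120; 260; 204; 300; 20; 188; 48; 104; 234; 262; 122; 290; 38; 124; 152; 12; 180; 236; 80; 108; 276; 136; 192; 115; 59; 31; 3; 199; 70; 210; 126; 42; 14; 146; 174; 34; 202; 258; 223; 251; 111; 279; 27; 143; 110; 176; 44; 286; 209; 297; 264; 22; 55; 11; 99; 231; 198; 275; 165; 88; 253; 66; 33; 242; 0; 121; 154; 132; 220; 187; 77; 0]; [:: 150; 10; 94; 178; 206; 259; 7; 35; 63; 175; 93; 37; 9; 289; 177; 8; 288; 120; 260; 204; 298; 102; 158; 214; 130; 141; 225; 113; 1; 169; 182; 238; 266; 294; 98; 36; 64; 232; 92; 148; 106; 274; 50; 134; 162; 184; 156; 296; 128; 72; 14; 42; 210; 70; 126; 86; 170; 58; 254; 114; 85; 57; 197; 29; 281; 228; 200; 32; 172; 116; 119; 203; 91; 287; 147; 213; 45; 269; 185; 157; 305; 277; 109; 249; 193; 6; 62; 90; 118; 230; 31; 115; 3; 199; 59; 188; 300; 48; 104; 20; 179; 207; 67; 235; 291; 137; 81; 53; 25; 221; 227; 87; 171; 255; 283; 258; 202; 174; 146; 34; 125; 265; 181; 97; 69; 240; 16; 212; 100; 268; 124; 152; 12; 180; 236; 251; 27; 223; 111; 279; 112; 28; 140; 252; 84; 19; 299; 131; 271; 215; 52; 24; 164; 304;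 248; 217; 189; 21; 161; 105; 270; 18; 46; 74; 186; 205; 65; 149; 233; 261; 101; 17; 129; 241; 73; 51; 219; 303; 79; 107; 2; 226; 30; 142; 282; 89; 201; 257; 5; 229; 256; 284; 144; 4; 60; 139; 307; 83; 167; 195; 117; 285; 61; 145; 173; 263; 151; 95; 39; 123; 136; 276; 192; 108; 80; 38; 290; 262; 234; 122; 40; 208; 292; 68; 96; 138; 194; 222; 250; 54; 15; 155; 71; 295; 267; 243; 47; 103; 159; 75; 306; 82; 278; 166; 26; 211; 127; 239; 43; 183; 237; 293; 13; 41; 153; 196; 280; 168; 56; 224; 190; 218; 78; 246; 302; 247; 191; 163; 135; 23; 244; 160; 272; 76; 216; 49; 301; 273; 245; 133; 77; 275; 44; 66; 55; 297; 22; 220; 88; 209; 121; 154; 132; 110; 11; 286; 242; 143; 33; 165; 253; 187; 264; 99; 231; 198; 176; 0; 0]; nseq 309 0].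
Lemma chk308 : check 308 L308. Proof. vm_compute. reflexivity. Qed.

Definition L340 : seq (seq nat) := [:: [:: 120; 240; 140; 280; 60; 200; 100; 220; 20; 40; 80; 160; 180; 260; 300; 320; 1; 121; 21; 161; 281; 81; 321; 101; 241; 261; 301; 41; 61; 141; 181; 201; 122; 142; 182; 262; 282; 22; 62; 82; 222; 2; 242; 42; 162; 302; 202; 322; 103; 223; 123; 263; 43; 183; 83; 203; 3; 23; 63; 143; 163; 243; 283; 303; 224; 244; 284; 24; 44; 124; 164; 184; 324; 104; 4; 144; 264; 64; 304; 84; 105; 125; 165; 245; 265; 5; 45; 65; 205; 325; 225; 25; 145; 285; 185; 305; 326; 6; 46; 126; 146; 226; 266; 286; 86; 206; 106; 246; 26; 166; 66; 186; 207; 227; 267; 7; 27; 107; 147; 167; 307; 87; 327; 127; 247; 47; 287; 67; 188; 308; 208; 8; 128; 268; 168; 288; 88; 108; 148; 228; 248; 328; 28; 48; 69; 189; 89; 229; 9; 149; 49; 169; 309; 329; 29; 109; 129; 209; 249; 269; 190; 210; 250; 330; 10; 90; 130; 150; 290; 70; 310; 110; 230; 30; 270; 50; 171; 291; 191; 331; 111; 251; 151; 271; 71; 91; 131; 211; 231; 311; 11; 31; 292; 312; 12; 92; 112; 192; 232; 252; 52; 172; 72; 212; 332; 132; 32; 152; 173; 193; 233; 313; 333; 73; 113; 133; 273; 53; 293; 93; 213; 13; 253; 33; 154; 274; 174; 314; 94; 234; 134; 254; 54; 74; 114; 194; 214; 294; 334; 14; 275; 295; 335; 75; 95; 175; 215;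 235; 35; 155; 55; 195; 315; 115; 15; 135; 156; 176; 216; 296; 316; 56; 96; 116; 256; 36; 276; 76; 196; 336; 236; 16; 137; 257; 157; 297; 77; 217; 117; 237; 37; 57; 97; 177; 197; 277; 317; 337; 18; 138; 38; 178; 298; 98; 338; 118; 258; 278; 318; 58; 78; 158; 198; 218; 139; 159; 199; 279; 299; 39; 79; 99; 239; 19; 259; 59; 179; 319; 219; 339; 0; 221; 102; 323; 204; 85; 306; 187; 68; 289; 170; 51; 272; 153; 34; 255; 136; 17; 238; 119; 0]; [:: 121; 21; 161; 101; 1; 281; 81; 321; 273; 53; 293; 93; 213; 13; 253; 33; 123; 263; 203; 83; 223; 103; 43; 183; 8; 288; 168; 268; 208; 308; 188; 128; 210; 250; 330; 150; 190; 10; 90; 130; 87; 327; 127; 67; 307; 247; 47; 287; 57; 97; 177; 337; 37; 197; 277; 317; 137; 257; 157; 297; 77; 217; 117; 237; 154; 274; 174; 314; 94; 234; 134; 254; 142; 182; 262; 82; 122; 282; 22; 62; 192; 112; 292; 312; 232; 252; 92; 12; 329; 29; 109; 269; 309; 129; 209; 249; 324; 104; 4; 144; 264; 64; 304; 84; 72; 212; 152; 32; 172; 52; 332; 132; 158; 78; 258; 278; 198; 218; 58; 318; 206; 106; 246; 186; 86; 26; 166; 66; 38; 178; 118; 338; 138; 18; 298; 98; 229; 169; 49; 149; 89; 189; 69; 9; 241; 261; 301; 41; 61; 141; 181; 201; 280; 220; 100; 200; 140; 240; 120; 60; 73; 333; 173; 193; 113; 133; 313; 233; 125; 165; 245; 65;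 105; 265; 5; 45; 227; 267; 7; 167; 207; 27; 107; 147; 226; 146; 326; 6; 266; 286; 126; 46; 260; 180; 20; 40; 300; 320; 160; 80; 156; 176; 216; 296; 316; 56; 96; 116; 42; 322; 202; 302; 242; 2; 222; 162; 276; 76; 16; 236; 36; 256; 196; 336; 191; 331; 271; 151; 291; 171; 111; 251; 290; 70; 310; 110; 230; 30; 270; 50; 124; 44; 224; 244; 164; 184; 24; 284; 295; 335; 75; 235; 275; 95; 175; 215; 195; 135; 15; 115; 55; 155; 35; 315; 108; 148; 228; 48; 88; 248; 328; 28; 19; 259; 59; 339; 239; 179; 319; 219; 294; 214; 54; 74; 334; 14; 194; 114; 23; 63; 143; 303; 3; 163; 243; 283; 91; 131; 211; 31; 71; 231; 311; 11; 39; 299; 139; 159; 79; 99; 279; 199; 325; 225; 25; 305; 205; 145; 285; 185; 153; 238; 221; 272; 0; 17; 51; 289; 323; 187; 136; 119; 255; 34; 68; 85; 306; 204; 102; 170; 0]; [:: 55; 195; 135; 15; 155; 35; 315; 115; 277; 197; 37; 57; 317; 337; 177; 97; 117; 217; 77; 137; 237; 297; 157; 257; 106; 246; 186; 66; 206; 86; 26; 166; 45; 5; 265; 105; 65; 245; 165; 125; 210; 250; 330; 150; 190; 10; 90; 130; 53; 293; 93; 33; 273; 213; 13; 253; 163; 3; 23; 63; 243; 283; 303; 143; 278; 318; 58; 218; 258; 78; 158; 198; 7; 167; 147; 107; 267; 227; 207; 27; 249; 209; 129; 309; 269; 109; 29; 329; 251; 111; 171; 291; 151; 271; 331; 191; 127;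 67; 287; 47; 327; 87; 307; 247; 279; 99; 79; 39; 199; 159; 139; 299; 188; 308; 208; 8; 128; 268; 168; 288; 126; 286; 266; 226; 46; 6; 326; 146; 316; 156; 176; 216; 56; 96; 116; 296; 41; 201; 181; 141; 301; 261; 241; 61; 140; 280; 220; 100; 240; 120; 60; 200; 311; 231; 71; 91; 11; 31; 211; 131; 325; 225; 25; 305; 205; 145; 285; 185; 242; 42; 322; 202; 2; 222; 162; 302; 113; 73; 333; 173; 133; 313; 233; 193; 95; 275; 295; 335; 175; 215; 235; 75; 59; 339; 219; 319; 259; 19; 239; 179; 281; 1; 121; 21; 81; 321; 101; 161; 43; 103; 223; 123; 183; 83; 203; 263; 224; 244; 284; 24; 44; 124; 164; 184; 332; 52; 172; 72; 132; 32; 152; 212; 112; 292; 312; 12; 192; 232; 252; 92; 180; 20; 40; 80; 260; 300; 320; 160; 22; 282; 122; 142; 62; 82; 262; 182; 310; 110; 50; 270; 70; 290; 230; 30; 196; 256; 36; 276; 336; 236; 16; 76; 9; 69; 189; 89; 149; 49; 169; 229; 74; 114; 194; 14; 54; 214; 294; 334; 274; 174; 314; 254; 154; 94; 234; 134; 104; 4; 144; 84; 324; 264; 64; 304; 108; 148; 228; 48; 88; 248; 328; 28; 298; 18; 138; 38; 98; 338; 118; 178; 34; 289; 119; 68; 17; 323; 221; 238; 255; 51; 306; 272; 102; 136; 153; 204; 0; 187; 170; 85; 0]; nseq 341 0].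
Lemma chk340 : check 340 L340. Proof. vm_compute. reflexivity. Qed.

Theorem mainTheorem12 :
  forall n : nat, n \in [:: 140; 196; 220; 260; 308; 340] ->
    exists Q : 'M['I_n]_(n.+1, 4),
      is_DCA Q /\ DCA_normalized Q /\ DCA_P1 Q /\ DCA_P2 Q.
Proof.
move=> n; rewrite !inE => /orP [/eqP -> | /orP [/eqP -> | /orP [/eqP -> | /orP [/eqP -> | /orP [/eqP -> | /eqP ->]]]]].
- exact: (gen chk140).
- exact: (gen chk196).
- exact: (gen chk220).
- exact: (gen chk260).
- exact: (gen chk308).
- exact: (gen chk340).
Qed.
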